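(* Let $G=(V,E)$ be a simple, connected graph. Then there exists a partition $V = A \cup B \cup C$ into pairwise disjoint sets ($C$ possibly empty) such that: (1) every $v \in A$ satisfies $d_B(v) \geq d_A(v) + \max\{1, d_C(v)\}$; (2) every $v \in B$ satisfies $d_A(v) \geq d_B(v) + \max\{1, d_C(v)\}$; (3) no two vertices of $C$ are joined by an edge, i.e. $d_C(v) = 0$ for all $v \in C$; (4) every $v \in C$ satisfies $d_A(v) = d_B(v)$; (5) $\# E(A \cup B, C) + 2\# E(A,A) + 2\# E(B,B) \leq 2\# E(A,B)$.
   Context: For a vertex $v$ and a set $S \subseteq V$, $d_S(v)$ denotes the number of neighbors of $v$ lying in $S$. For disjoint $X, Y \subseteq V$, $\# E(X,Y)$ is the number of edges with one endpoint in $X$ and the other in $Y$; $\# E(X,X)$ is the number of edges with both endpoints in $X$. *)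

(* Defs.v *)
From mathcomp Require Import all_boot.
Set Implicit Arguments. Unset Strict Implicit. Unset Printing Implicit Defensive.

Definition simple_graph (T : finType) (e : rel T) : Prop :=
  symmetric e /\ irreflexive e.

Definition connected_graph (T : finType) (e : rel T) : Prop :=
  forall x y : T, connect e x y.

Definition deg_in (T : finType) (e : rel T) (S : {set T}) (v : T) : nat :=
  #|[set u in S | e v u]|.

Definition edges (T : finType) (e : rel T) : {set {set T}} :=
  [set E : {set T} | [exists x, exists y, e x y && (E == [set x; y])]].

Definition nedges_between (T : finType) (e : rel T) (X Y : {set T}) : nat :=
  #|[set E in edges e | [exists x in X, exists y in Y, E == [set x; y]]]|.

Definition nedges_within (T : finType) (e : rel T) (X : {set T}) : nat :=
  #|[set E in edges e | E \subset X]|.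

(* Main.v *)
Require Import Defs.
From mathcomp Require Import all_boot all_order all_algebra.
From mathcomp Require Import zify ring lra.
Set Implicit Arguments. Unset Strict Implicit. Unset Printing Implicit Defensive.
Import Order.TTheory GRing.Theory Num.Theory.

Section Q.
Local Open Scope ring_scope.
Variables (T : finType) (e : rel T).
Hypothesis esym : symmetric e.
Hypothesis eirr : irreflexive e.

Definition Qf (h : T -> int) : int := \sum_x \sum_y (e x y)%:R * h x * h y.
Definition Mf (h : T -> int) x : int := \sum_y (e x y)%:R * h y.

Lemma Q_ext h1 h2 : h1 =1 h2 -> Qf h1 = Qf h2.
Proof. by move=> H; apply: eq_bigr=> x _; apply: eq_bigr=> y _; rewrite !H. Qed.

Lemma Q_add (h t : T -> int) : Qf (fun x => h x + t x) = Qf h + 2 * (\sum_x t x * Mf h x) + Qf t.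
Proof.
rewrite /Qf.
have E : forall x y, (e x y)%:R * (h x + t x) * (h y + t y) =
   (e x y)%:R * h x * h y + ((e x y)%:R * t x * h y + (e x y)%:R * h x * t y)
   + (e x y)%:R * t x * t y :> int by move=> x y; ring.
transitivity (\sum_x \sum_y (e x y)%:R * h x * h y + (\sum_x \sum_y (e x y)%:R * t x * h y + \sum_x \sum_y (e x y)%:R * h x * t y) + \sum_x \sum_y (e x y)%:R * t x * t y).
  rewrite -!big_split /=; apply: eq_bigr => x _; rewrite -!big_split /=.
  by apply: eq_bigr => y _; rewrite E.
have -> : \sum_x \sum_y (e x y)%:R * h x * t y = \sum_x \sum_y (e x y)%:R * t x * h y :> int.
  rewrite exchange_big /=; apply: eq_bigr => x _; apply: eq_bigr => y _.
  by rewrite esym; ring.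
congr (_ + _ + _).
rewrite mulr2n mulrDl !mul1r /Mf; congr (_ + _);
by apply: eq_bigr => x _; rewrite mulr_sumr; apply: eq_bigr => y _; ring.
Qed.

Lemma Q_supp (t : T -> int) : (forall x y, t x != 0 -> t y != 0 -> ~~ e x y) -> Qf t = 0.
Proof.
move=> H; apply: big1 => x _; apply: big1 => y _.
have [->|tx] := eqVneq (t x) 0; first by rewrite mulr0 mul0r.
have [->|ty] := eqVneq (t y) 0; first by rewrite mulr0.
by rewrite (negbTE (H _ _ tx ty)) !mul0r.
Qed.

Lemma Q_pt (h : T -> int) v (c : int) : Qf (fun x => h x + (x == v)%:R * c) = Qf h + 2 * c * Mf h v.
Proof.
rewrite Q_add (@Q_supp (fun x => (x == v)%:R * c)); last first.
  move=> x y /=; case: (eqVneq x v) => [->|nx]; last by rewrite /= mul0r eqxx.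
  case: (eqVneq y v) => [->|ny]; last by rewrite /= mul0r eqxx.
  by rewrite eirr.
rewrite addr0 (bigD1 v) //= big1 ?addr0 ?eqxx ?mul1r ?mulrA //.
by move=> x /negbTE ->; rewrite !mul0r.
Qed.

Lemma M_lin (h : T -> int) v (c : int) x : Mf (fun y => h y + (y == v)%:R * c) x = Mf h x + (e x v)%:R * c.
Proof.
rewrite /Mf; under eq_bigr do rewrite mulrDr; rewrite big_split /=; congr (_ + _).
rewrite (bigD1 v) //= big1 ?addr0 ?eqxx ?mul1r //.
by move=> y /negbTE ->; rewrite mul0r mulr0.
Qed.

Lemma card_int (P : pred T) : (#|[set u | P u]|)%:R = \sum_u (P u)%:R :> int.
Proof.
rewrite cardsE -sum1_card natr_sum big_mkcond /=; apply: eq_bigr => u _.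
by rewrite unfold_in; case: (P u).
Qed.

Definition sg (i : 'I_3) : int := ((i : nat) == 0%N)%:R - ((i : nat) == 1%N)%:R.
Definition cls (f : {ffun T -> 'I_3}) (k : nat) := [set x | (f x : nat) == k].
Definition hf (f : {ffun T -> 'I_3}) x := sg (f x).

Lemma M_col f x : Mf (hf f) x = (deg_in e (cls f 0) x)%:R - (deg_in e (cls f 1) x)%:R.
Proof.
rewrite /deg_in.
rewrite !card_int -sumrB /Mf; apply: eq_bigr => y _.
rewrite /hf /sg !inE; case: (e x y); rewrite ?andbT ?andbF ?mul0r ?subr0 ?mul1r //.
Qed.

End Q.
Section Count.
Variables (T : finType) (e : rel T).
Hypothesis esym : symmetric e.
Hypothesis eirr : irreflexive e.

Definition PS (X Y : {set T}) := [set p : T * T | (p.1 \in X) && (p.2 \in Y) && e p.1 p.2].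
Definition f2 (p : T * T) := [set p.1; p.2].

Lemma sum_deg_PS (X Y : {set T}) : \sum_(x in X) deg_in e Y x = #|PS X Y|.
Proof.
rewrite -sum1_card [RHS]big_mkcond big_mkcond /=.
transitivity (\sum_x \sum_(u : T) if (x, u) \in PS X Y then 1 else 0).
  rewrite big_mkcond /=; apply: eq_bigr => x _; rewrite /deg_in -sum1_card big_mkcond /=.
  case: ifP => xX; first by apply: eq_bigr => u _; rewrite !inE /= xX.
  by rewrite big1 // => u _; rewrite !inE /= xX.
rewrite (pair_big xpredT xpredT (fun x u => if (x, u) \in PS X Y then 1 else 0)) /=.
by apply: eq_bigr => [[a b]] _.
Qed.

Lemma edge_pair a b x y : e a b -> [set a; b] = [set x; y] -> e x y.
Proof.
move=> eab H.
have hx := set21 x y; have hy := set22 x y; have ha := set21 a b; have hb := set22 a b.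
rewrite H in ha hb; rewrite -H in hx hy.
case/set2P: hx => ?; case/set2P: hy => ?; subst => //.
- by case/set2P: hb => ?; subst; rewrite eirr in eab.
- by rewrite esym.
- by case/set2P: ha => ?; subst; rewrite eirr in eab.
Qed.

Lemma nb_upper (X Y : {set T}) : nedges_between e X Y <= #|PS X Y|.
Proof.
apply: leq_trans (leq_imset_card f2 _); apply: subset_leq_card.
apply/subsetP => E; rewrite !inE => /andP [/existsP [a /existsP [b /andP [eab /eqP Eab]]]].
move=> /existsP [x /andP [xX /existsP [y /andP [yY /eqP Exy]]]].
apply/imsetP; exists (x, y); last by rewrite Exy.
rewrite !inE /= xX yY /=; exact: (edge_pair eab (etrans (Logic.eq_sym Eab) Exy)).
Qed.

Lemma nb_lower (X Y : {set T}) : [disjoint X & Y] -> #|PS X Y| <= nedges_between e X Y.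
Proof.
move=> dXY.
rewrite -(card_in_imset (f := f2)); last first.
  move=> [p1 p2] [q1 q2]; rewrite !inE /= => /andP [/andP [p1X p2Y] _] /andP [/andP [q1X q2Y] _].
  rewrite /f2 /= => H.
  have nXY : forall z, z \in X -> z \in Y -> False.
    by move=> z zX zY; move: (disjointFr dXY zX); rewrite zY.
  have := set21 p1 p2; rewrite H => /set2P [] E1; last by subst; case: (nXY q2).
  have := set22 p1 p2; rewrite H => /set2P [] E2; first by subst; case: (nXY q1).
  by rewrite E1 E2.
apply: subset_leq_card; apply/subsetP => E /imsetP [[a b]]; rewrite !inE /= => /andP [/andP [aX bY] eab] ->.
apply/andP; split.
  by apply/existsP; exists a; apply/existsP; exists b; rewrite eab eqxx.
by apply/existsP; exists a; rewrite aX; apply/existsP; exists b; rewrite bY eqxx.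
Qed.

Lemma nb_sym (X Y : {set T}) : nedges_between e X Y = nedges_between e Y X.
Proof.
rewrite /nedges_between; apply: eq_card => E; rewrite !inE; congr (_ && _).
apply/existsP/existsP => [] [x /andP [xX /existsP [y /andP [yY /eqP ->]]]];
 exists y; rewrite yY /=; apply/existsP; exists x; by rewrite xX setUC eqxx.
Qed.

Lemma nw_upper (X : {set T}) : 2 * nedges_within e X <= #|PS X X|.
Proof.
rewrite -sum1_card (partition_big f2 (mem [set E in edges e | E \subset X])) /=; last first.
  move=> [a b]; rewrite !inE /= => /andP [/andP [aX bX] eab]; apply/andP; split.
    by apply/existsP; exists a; apply/existsP; exists b; rewrite eab eqxx.
  by apply/subsetP => z /set2P [] ->.
rewrite /nedges_within -sum1_card big_distrr /=.
apply: leq_sum => E; rewrite !inE => /andP [/existsP [a /existsP [b /andP [eab /eqP Eab]]] sEX].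
rewrite muln1 sum1dep_card.
have aX : a \in X by apply: (subsetP sEX); rewrite Eab set21.
have bX : b \in X by apply: (subsetP sEX); rewrite Eab set22.
have nab : (a, b) != (b, a).
  apply/negP => /eqP [] E'; by rewrite E' eirr in eab.
apply: (@leq_trans #|[set (a, b); (b, a)]|); first by rewrite cards2 nab.
apply: subset_leq_card; apply/subsetP => p /set2P [] ->;
  rewrite !inE /= ?aX ?bX ?eab /= ?(esym b a) ?eab /f2 /= Eab ?eqxx //.
by rewrite setUC.
Qed.

End Count.
Definition o0 : 'I_3 := @Ordinal 3 0 isT.
Definition o1 : 'I_3 := @Ordinal 3 1 isT.
Definition o2 : 'I_3 := @Ordinal 3 2 isT.

Lemma sg_sq (a : 'I_3) : (a : nat) != 2 -> (sg a * sg a = 1)%R.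
Proof. by case: a => [[|[|[|]]]] //= _ _; rewrite /sg /=. Qed.

Theorem theorem1 (T : finType) (e : rel T) :
  simple_graph e -> connected_graph e ->
  exists A B C : {set T},
    [disjoint A & B] /\ [disjoint A & C] /\ [disjoint B & C] /\
    A :|: B :|: C = [set: T] /\
    (forall v, v \in A ->
       deg_in e B v >= deg_in e A v + maxn 1 (deg_in e C v)) /\
    (forall v, v \in B ->
       deg_in e A v >= deg_in e B v + maxn 1 (deg_in e C v)) /\
    (forall v, v \in C -> deg_in e C v = 0) /\
    (forall v, v \in C -> deg_in e A v = deg_in e B v) /\
    nedges_between e (A :|: B) C + 2 * nedges_within e A
      + 2 * nedges_within e B <= 2 * nedges_between e A B.
Proof.
move=> [esym eirr] _.
pose feas (f : {ffun T -> 'I_3}) := [forall x, forall y, ((f x : nat) == 2) && ((f y : nat) == 2) ==> ~~ e x y].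
pose score (f : {ffun T -> 'I_3}) : int := (- (#|T|.+1)%:R * Qf e (hf f) + (#|cls f 2|)%:R)%R.
pose f0 : {ffun T -> 'I_3} := [ffun => o0].
have feas0 : feas f0 by apply/forallP=> x; apply/forallP=> y; rewrite !ffunE.
have feasE : forall g x y, feas g -> (g x : nat) == 2 -> (g y : nat) == 2 -> ~~ e x y.
  by move=> g x y /forallP/(_ x)/forallP/(_ y)/implyP H gx gy; apply: H; rewrite gx gy.
case: (arg_maxP score feas0) => f Hf Hmax.
have lex : forall g, feas g -> (Qf e (hf f) <= Qf e (hf g))%R /\
    (Qf e (hf g) = Qf e (hf f) -> #|cls g 2| <= #|cls f 2|).
  move=> g Hg; have := Hmax g Hg; rewrite /score => H.
  have c1 : #|cls f 2| <= #|T| := max_card _.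
  split; first by nia.
  by move=> E; rewrite E in H; lia.
have hset : forall v k, hf [ffun x => if x == v then k else f x] =1
    (fun x => hf f x + (x == v)%:R * (sg k - sg (f v)))%R.
  move=> v k x; rewrite /hf ffunE; case: (eqVneq x v) => [->|_] /=.
    by rewrite mul1r addrC subrK.
  by rewrite mul0r addr0.
have Cbal : forall v, (f v : nat) == 2 -> Mf e (hf f) v = 0%R.
  move=> v fv.
  have sgv : sg (f v) = 0%R by rewrite /sg (eqP fv).
  have feas_set : forall k : 'I_3, (k : nat) != 2 -> feas [ffun x => if x == v then k else f x].
    move=> k k2; apply/forallP=> x; apply/forallP=> y; apply/implyP; rewrite !ffunE.
    case: (eqVneq x v) => [_|_]; first by rewrite (negbTE k2).
    case: (eqVneq y v) => [_|_]; first by rewrite (negbTE k2) andbF.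
    by move=> /andP [fx fy]; apply: feasE Hf fx fy.
  have [H1 _] := lex _ (feas_set o0 isT).
  have [H2 _] := lex _ (feas_set o1 isT).
  rewrite (Q_ext e (hset v o0)) (Q_pt esym eirr) sgv in H1.
  rewrite (Q_ext e (hset v o1)) (Q_pt esym eirr) sgv in H2.
  move: H1 H2; rewrite /sg /=; lia.
have AB : forall v (a : 'I_3), (a : nat) != 2 -> f v = a ->
   (sg a * Mf e (hf f) v + (#|[set w | ((f w : nat) == 2) && e v w]|)%:R <= 0)%R /\
   (#|[set w | ((f w : nat) == 2) && e v w]| = 0 -> (sg a * Mf e (hf f) v < 0)%R).
  move=> v a a2 fva.
  set N := [set w | ((f w : nat) == 2) && e v w].
  pose g : {ffun T -> 'I_3} := [ffun x => if x == v then o2 else if x \in N then a else f x].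
  have vN : v \notin N by rewrite inE fva (negbTE a2).
  have hg : hf g =1 (fun x => (fun y => hf f y + (y == v)%:R * (- sg a)) x + (x \in N)%:R * sg a)%R.
    move=> x; rewrite /hf ffunE /=; case: (eqVneq x v) => [->|nxv] /=.
      by rewrite (negbTE vN) fva mul1r mul0r addr0 subrr /sg.
    case: ifP => xN; rewrite ?mul1r ?mul0r ?addr0 //.
    by move: xN; rewrite inE => /andP [/eqP fx _]; rewrite /sg fx /= subrr add0r.
  have gx2 : forall z, (g z : nat) == 2 -> z = v \/ (z \notin N /\ (f z : nat) == 2).
    move=> z; rewrite ffunE; case: (eqVneq z v) => [-> _|_]; first by left.
    by case: ifP => zN; [rewrite (negbTE a2) | right].
  have feasg : feas g.
    apply/forallP=> x; apply/forallP=> y; apply/implyP.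
    move=> /andP [/gx2 [->|[xN fx]] /gx2 [->|[yN fy]]].
    - by rewrite eirr.
    - by move: yN; rewrite inE fy.
    - by rewrite esym; move: xN; rewrite inE fx.
    - by apply: feasE Hf fx fy.
  have [H1 H2] := lex g feasg.
  have Qg : Qf e (hf g) = (Qf e (hf f) + 2 * (- sg a) * Mf e (hf f) v - 2 * (#|N|)%:R)%R.
    rewrite (Q_ext e hg) (Q_add esym) (Q_pt esym eirr).
    rewrite (@Q_supp _ _ (fun x => (x \in N)%:R * sg a)%R) ?addr0; last first.
      move=> x y /=; case: (boolP (x \in N)) => xN; last by rewrite mul0r eqxx.
      case: (boolP (y \in N)) => yN; last by rewrite mul0r eqxx.
      move: xN yN; rewrite !inE => /andP [fx _] /andP [fy _] _ _; by apply: feasE Hf fx fy.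
    have -> : (\sum_x (x \in N)%:R * sg a * Mf e (fun y => hf f y + (y == v)%:R * - sg a) x = - (#|N|)%:R)%R.
      rewrite /N card_int -sumrN; apply: eq_bigr => x _; rewrite M_lin inE.
      case: (boolP (((f x : nat) == 2) && e v x)) => /= [/andP [fx evx]|_].
        by rewrite Cbal // esym evx mul1r add0r mulrN /= mulr1n mul1r mulrN sg_sq.
      by rewrite !mul0r oppr0.
    by congr (_ + _)%R; rewrite mulrN.
  rewrite Qg in H1 H2.
  set m := Mf e (hf f) v in H1 H2 *; set s := sg a in H1 H2 *.
  split; first by nia.
  move=> N0; apply/negPn/negP => Hneg.
  have sm0 : (s * m = 0)%R by lia.
  have N0' : N = set0 by apply/eqP; rewrite -cards_eq0; apply/eqP.
  have sub : v |: cls f 2 \subset cls g 2.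
    apply/subsetP => x; rewrite !inE ffunE; case: (eqVneq x v) => //= _ fx.
    by rewrite N0' inE fx.
  have := subset_leq_card sub; rewrite cardsU1 inE fva (negbTE a2) /=.
  have := H2; rewrite N0 /=. move=> H3. have H4 := H3 ltac:(lia). lia.
have degN : forall v, #|[set w | ((f w : nat) == 2) && e v w]| = deg_in e (cls f 2) v.
  by move=> v; rewrite /deg_in; apply: eq_card => w; rewrite !inE.
have condA : forall v, v \in cls f 0 ->
    deg_in e (cls f 0) v + maxn 1 (deg_in e (cls f 2) v) <= deg_in e (cls f 1) v.
  move=> v; rewrite inE => /eqP fv.
  have fv2 : (f v : nat) != 2 by rewrite fv.
  have [H1 H2] := AB v (f v) fv2 erefl.
  move: H1 H2; rewrite degN M_col /sg fv /=; lia.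
have condB : forall v, v \in cls f 1 ->
    deg_in e (cls f 1) v + maxn 1 (deg_in e (cls f 2) v) <= deg_in e (cls f 0) v.
  move=> v; rewrite inE => /eqP fv.
  have fv2 : (f v : nat) != 2 by rewrite fv.
  have [H1 H2] := AB v (f v) fv2 erefl.
  move: H1 H2; rewrite degN M_col /sg fv /=; lia.
exists (cls f 0), (cls f 1), (cls f 2).
have dis : forall i j, i != j -> [disjoint cls f i & cls f j].
  move=> i j ij; rewrite -setI_eq0; apply/eqP/setP => x; rewrite !inE.
  by apply/negP => /andP [/eqP -> /eqP E]; rewrite E eqxx in ij.
split; first exact: dis.
split; first exact: dis.
split; first exact: dis.
split.
  apply/setP => x; rewrite !inE; by case: (f x) => [[|[|[|m]]] H].
split; first exact: condA.
split; first exact: condB.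
have C0 : forall v, v \in cls f 2 -> deg_in e (cls f 2) v = 0.
  move=> v; rewrite inE => vC; apply/eqP; rewrite cards_eq0; apply/eqP/setP => u.
  rewrite !inE; apply/negbTE/negP => /andP [uC evu].
  by move: (feasE f v u Hf vC uC); rewrite evu.
split; first exact: C0.
split.
  move=> v vC; have := Cbal v; rewrite M_col; move: vC; rewrite inE => vC H.
  have := H vC; lia.
set A := cls f 0; set B := cls f 1; set C := cls f 2.
have sA : \sum_(x in A) (deg_in e A x + deg_in e C x) <= \sum_(x in A) deg_in e B x.
  apply: leq_sum => x xA; have := condA x xA; rewrite /A /B /C; lia.
have sB : \sum_(x in B) (deg_in e B x + deg_in e C x) <= \sum_(x in B) deg_in e A x.
  apply: leq_sum => x xB; have := condB x xB; rewrite /A /B /C; lia.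
rewrite !big_split /= in sA sB.
have dAB : [disjoint A & B] by apply: dis.
have u1 : nedges_between e (A :|: B) C <= \sum_(x in A) deg_in e C x + \sum_(x in B) deg_in e C x.
  rewrite -bigU //; apply: (leq_trans (nb_upper esym eirr _ _)); rewrite -sum_deg_PS.
  by rewrite (eq_bigl [predU A & B]) // => x; rewrite !inE.
have u2 := nw_upper esym eirr A; rewrite -sum_deg_PS in u2.
have u3 := nw_upper esym eirr B; rewrite -sum_deg_PS in u3.
have l1 := nb_lower e dAB; rewrite -sum_deg_PS in l1.
have l2 := nb_lower e (dis 1 0 isT); rewrite -sum_deg_PS -nb_sym in l2.
rewrite -/A -/B in l2; lia.
Qed.
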